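(* Let $H$ be a non-cocommutative semisimple Hopf algebra over $k$ with a subgroup $G\subseteq G(H)$ of index $[H:kG]=2$, so that as a coalgebra $H\simeq kG\oplus M_d(k)^{\oplus n}$ with $d>1$, $|G|=d^2n$. Let $\Gamma\subseteq G$ be the common stabilizer, under left multiplication, of the irreducible characters of degree $d$, and write $H$, via the cocentral abelian exact sequence $k\to k^{\widehat\Gamma}\to H\to kF\to k$, as a bicrossed product $k^{\widehat\Gamma}\,{}^\tau\#_\sigma kF$ with cocycles $\sigma:F\times F\to(k^{\widehat\Gamma})^\times$ and $\tau:\widehat\Gamma\times\widehat\Gamma\to(k^F)^\times$, $\tau(s,t)=\sum_{y\in F}\tau_y(s,t)e_y$. Let $F_0=\{x\in F: [\tau_x]=1\}$. Then there is an exact sequence of groups $1\to\Gamma\to G\to F_0\to1$. In particular $|F_0|=n$.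
   Context: $k$ is an algebraically closed field of characteristic zero; $M_d(k)$ is the matrix coalgebra of dimension $d^2$. Irreducible characters of $H$ are characters of simple $H$-comodules viewed as elements of $H$. $\widehat\Gamma$ is the character group of the abelian group $\Gamma$, and $k\Gamma\cong k^{\widehat\Gamma}$ is a normal Hopf subalgebra with $H/H(k\Gamma)^+\cong kF$; the extension is cocentral, i.e. the matched-pair action of $\widehat\Gamma$ on $F$ is trivial, so each $\tau_x:\widehat\Gamma\times\widehat\Gamma\to k^\times$ is a normalized $2$-cocycle and $[\tau_x]$ is its class in $H^2(\widehat\Gamma,k^\times)$. The bicrossed product has multiplication $(e_s\#x)(e_t\#y)=\delta_{s\triangleleft x,t}\sigma_s(x,y)e_s\#xy$ and comultiplication $\Delta(e_s\#x)=\sum_{gh=s}\tau_x(g,h)e_g\#x\otimes e_h\#x$. *)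

(* Defs.v *)
(* Finite-dimensional Hopf algebras presented concretely on
   the coordinate space 'rV[k]_N with basis b_i = delta_mx 0 i;
   H (x) H is identified with 'M[k]_N (entry (i,j) = coefficient of b_i (x) b_j). *)
From HB Require Import structures.
From mathcomp Require Import all_boot all_order all_algebra all_fingroup.
From mathcomp Require Import boolp.
Set Implicit Arguments. Unset Strict Implicit. Unset Printing Implicit Defensive.
Import GRing.Theory.
Local Open Scope ring_scope.

Section Hopf.
Variables (k : fieldType) (N : nat).
Local Notation V := 'rV[k]_N.

Record hopf_data := HopfData {
  hmulc : 'I_N -> 'I_N -> V;
  hunit : V;
  hcomulc : 'I_N -> 'M[k]_N;
  hcounitc : 'I_N -> k;
  hantic : 'I_N -> V }.

Definition bvec (i : 'I_N) : V := delta_mx 0 i.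

Definition tens (u v : V) : 'M[k]_N := u^T *m v.

Variable H : hopf_data.

Definition hmul (u v : V) : V :=
  \sum_(i < N) \sum_(j < N) (u 0 i * v 0 j) *: hmulc H i j.
Definition comul (u : V) : 'M[k]_N := \sum_(i < N) u 0 i *: hcomulc H i.
Definition counit (u : V) : k := \sum_(i < N) u 0 i * hcounitc H i.
Definition anti (u : V) : V := \sum_(i < N) u 0 i *: hantic H i.

Definition tmul (M M' : 'M[k]_N) : 'M[k]_N :=
  \sum_(i < N) \sum_(j < N) \sum_(i' < N) \sum_(j' < N)
     (M i j * M' i' j') *: tens (hmul (bvec i) (bvec i')) (hmul (bvec j) (bvec j')).

Definition is_hopf : Prop :=
  (forall u v w, hmul (hmul u v) w = hmul u (hmul v w)) /\
      (forall u, hmul (hunit H) u = u /\ hmul u (hunit H) = u) /\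
      (forall u (i j l : 'I_N),
          \sum_(p < N) comul u p l * comul (bvec p) i j
        = \sum_(q < N) comul u i q * comul (bvec q) j l) /\
      (forall u (i : 'I_N),
          \sum_(p < N) comul u p i * counit (bvec p) = u 0 i
       /\ \sum_(q < N) comul u i q * counit (bvec q) = u 0 i) /\
      (forall u v, comul (hmul u v) = tmul (comul u) (comul v)
                   /\ counit (hmul u v) = counit u * counit v) /\
      (comul (hunit H) = tens (hunit H) (hunit H) /\ counit (hunit H) = 1) /\
      (forall u,
          \sum_(i < N) \sum_(j < N) comul u i j *: hmul (anti (bvec i)) (bvec j)
            = counit u *: hunit H
       /\ \sum_(i < N) \sum_(j < N) comul u i j *: hmul (bvec i) (anti (bvec j))
            = counit u *: hunit H).

Definition cocommutative : Prop := forall u, (comul u)^T = comul u.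

Definition hprod (s : seq V) : V := foldr hmul (hunit H) s.

(* semisimple (as an algebra): the only nilpotent two-sided ideal is 0,
   i.e. the Jacobson radical vanishes *)
Definition two_sided_ideal (I : {vspace V}) : Prop :=
  forall x y, y \in I -> hmul x y \in I /\ hmul y x \in I.
Definition nilpotent_ideal (I : {vspace V}) : Prop :=
  exists m : nat, forall s : seq V, size s = m.+1 -> all (fun x => x \in I) s ->
    hprod s = 0.
Definition semisimple : Prop :=
  forall I : {vspace V}, two_sided_ideal I -> nilpotent_ideal I -> I = 0%VS.

Definition grouplike (g : V) : Prop := comul g = tens g g /\ counit g = 1.

(* d^2 linearly independent elements forming a matrix coalgebra basis
   (the matrix coefficients of a simple d-dimensional comodule) *)
Definition matcoalg (d : nat) (e : 'I_d -> 'I_d -> V) : Prop :=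
  [/\ free [seq e p.1 p.2 | p <- enum {: 'I_d * 'I_d}],
      (forall i j, comul (e i j) = \sum_(l < d) tens (e i l) (e l j)) &
      (forall i j, counit (e i j) = (i == j)%:R)].

Definition irr_char (d : nat) (chi : V) : Prop :=
  exists e : 'I_d -> 'I_d -> V, matcoalg e /\ chi = \sum_(i < d) e i i.

End Hopf.

(* [c] = 1 in H^2(A, k^x) (trivial action) *)
Definition trivial_class (k : fieldType) (A : finGroupType) (c : A -> A -> k) : Prop :=
  exists mu : A -> k, (forall g, mu g != 0) /\
    forall g h, c g h = mu g * mu h / mu (g * h)%g.

(* Main.v *)
Require Import Defs.
From HB Require Import structures.
From mathcomp Require Import all_boot all_order all_algebra all_fingroup.
From mathcomp Require Import boolp.
From mathcomp Require Import ring.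
Import GRing.Theory.
Local Open Scope ring_scope.

Module Aux.
Set Implicit Arguments. Unset Strict Implicit. Unset Printing Implicit Defensive.


Definition fam (I : finType) (T : Type) (u : I -> T) := [seq u i | i <- enum {: I}].

Lemma trZ (R : comRingType) m n a (A : 'M[R]_(m, n)) : (a *: A)^T = a *: A^T.
Proof. by apply/matrixP => i j; rewrite !mxE. Qed.

Lemma trS (R : comRingType) m n I (r : seq I) (P : pred I) (F : I -> 'M[R]_(m, n)) :
  (\sum_(i <- r | P i) F i)^T = \sum_(i <- r | P i) (F i)^T.
Proof.
apply: (big_morph (@trmx R m n)) => [A B|]; apply/matrixP => i j; by rewrite !mxE.
Qed.

Lemma sumZ_if1T (Z : zmodType) (I : finType) (F : I -> Z) a :
  \sum_i (if i == a then F i else 0) = F a.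
Proof.
rewrite (bigD1 a) //= eqxx big1 ?addr0 // => i /negbTE -> //.
Qed.

Lemma sumZ_if1Ts (Z : zmodType) (I : finType) (F : I -> Z) a :
  \sum_i (if a == i then F i else 0) = F a.
Proof.
by rewrite -(sumZ_if1T F a); apply: eq_bigr => i _; rewrite eq_sym.
Qed.

Section Gen.
Variables (k : fieldType) (N : nat).
Local Notation V := 'rV[k]_N.

Lemma span_expand (X : seq V) v : uniq X -> v \in <<X>>%VS ->
  exists c : V -> k, v = \sum_(x <- X) c x *: x.
Proof.
elim: X v => [|x X IH] v /=.
  by move=> _; rewrite span_nil memv0 => /eqP->; exists (fun _ => 0); rewrite big_nil.
case/andP=> xX uX; rewrite span_cons => /memv_addP[w /vlineP[a ->] [w' /(IH _ uX)[c ->] ->]].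
exists (fun y => if y == x then a else c y); rewrite big_cons eqxx; congr (_ + _).
apply: eq_big_seq => y yX; case: eqP => [yx|//]; by rewrite -yx yX in xX.
Qed.

Lemma fam_inj (I : finType) (u : I -> V) :
  uniq [seq u i | i <- enum {: I}] -> injective u.
Proof.
move=> U i j eq; move/uniqP: U => /(_ (u i) (index i (enum {: I})) (index j (enum {: I}))).
rewrite !inE size_map !index_mem !mem_enum !inE => /(_ isT isT).
rewrite !(nth_map i) -?enumT ?index_mem ?mem_enum // !nth_index ?mem_enum // => /(_ eq) ij.
by rewrite -(nth_index i (mem_enum {: I} i)) ij nth_index ?mem_enum.
Qed.

Lemma fam_expand (I : finType) (u : I -> V) (v : V) : injective u ->
  v \in <<fam u>>%VS -> exists c : I -> k, v = \sum_i c i *: u i.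
Proof.
move=> iu /span_expand []; first by rewrite /fam map_inj_uniq ?enum_uniq.
by move=> c ->; exists (c \o u); rewrite big_map big_enum.
Qed.

Lemma fam_in_span (I : finType) (u : I -> V) (c : I -> k) :
  \sum_i c i *: u i \in <<fam u>>%VS.
Proof.
apply: rpred_sum => i _; apply: rpredZ; apply: memv_span; apply: map_f; by rewrite mem_enum.
Qed.

Lemma dual (X : seq V) x0 : free X -> x0 \in X ->
  {c : 'cV[k]_N | forall x, x \in X -> (x *m c) 0 0 = (x == x0)%:R}.
Proof.
move=> fX x0X.
have [f /(_ fX)] := @linear_of_free _ _ k^o X [seq ((x == x0)%:R : k^o) | x <- X].
rewrite size_map => /(_ erefl) fm.
exists (\col_m f (delta_mx 0 m)) => x xX.
have -> : (x == x0)%:R = f x.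
  have := congr1 (nth 0 ^~ (index x X)) fm.
  by rewrite !(nth_map 0) ?index_mem // nth_index.
rewrite {2}(row_sum_delta x) linear_sum /= mxE; apply: eq_bigr => m _.
by rewrite linearZ /= mxE.
Qed.

Lemma sum_if1 (I : finType) (P : pred I) (F : I -> k) a :
  \sum_(i | P i) (if i == a then F i else 0) = if P a then F a else 0.
Proof.
rewrite big_mkcond (bigD1 a) //= eqxx big1 ?addr0 // => i /negbTE ->; by rewrite if_same.
Qed.

Lemma sumv_if1 (I : finType) (P : pred I) (F : I -> V) a :
  \sum_(i | P i) (if i == a then F i else 0) = if P a then F a else 0.
Proof.
rewrite big_mkcond (bigD1 a) //= eqxx big1 ?addr0 // => i /negbTE ->; by rewrite if_same.
Qed.

Lemma sum_if1T (I : finType) (F : I -> k) a :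
  \sum_i (if i == a then F i else 0) = F a.
Proof. by rewrite (sum_if1 xpredT). Qed.

Lemma sumv_if1T (I : finType) (F : I -> V) a :
  \sum_i (if i == a then F i else 0) = F a.
Proof. by rewrite (sumv_if1 xpredT). Qed.

Lemma sumdual (I : finType) (u : I -> V) (c : 'cV_N) (F : I -> k) i0 :
  (forall j, (u j *m c) 0 0 = (j == i0)%:R) -> ((\sum_j F j *: u j) *m c) 0 0 = F i0.
Proof.
move=> hc; rewrite mulmx_suml summxE (bigD1 i0) //= -scalemxAl mxE hc eqxx mulr1.
by rewrite big1 ?addr0 // => j /negbTE nj; rewrite -scalemxAl mxE hc nj mulr0.
Qed.

Lemma dimle (X Y : seq V) : free X -> {subset X <= <<Y>>%VS} -> (size X <= size Y)%N.
Proof.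
move=> fX sXY; rewrite -(eqP fX); apply: leq_trans (dim_span Y).
by apply: dimvS; apply/span_subvP.
Qed.

Lemma subfree (X Y : seq V) : free Y -> uniq X -> {subset X <= Y} -> free X.
Proof.
move=> fY uX sXY.
rewrite -(perm_free (uniq_perm (filter_uniq (fun x => x \in X) (free_uniq fY)) uX _)) ?filter_free //.
by move=> x; rewrite mem_filter; case xX: (x \in X) => //=; exact: sXY.
Qed.

Lemma fullspan (X : seq V) v : free X -> size X = N -> v \in <<X>>%VS.
Proof.
move=> fX sX; suff -> : <<X>>%VS = fullv by rewrite memvf.
by apply/eqP; rewrite eqEdim subvf dimvf /= (eqP fX) sX dim_matrix mul1r leqnn.
Qed.

Lemma cap0 (X Y : seq V) v : free (X ++ Y) -> v \in <<X>>%VS -> v \in <<Y>>%VS -> v = 0.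
Proof.
rewrite cat_free => /and3P[_ _ /directv_addP dXY] vX vY.
by apply/eqP; rewrite -memv0 -dXY memv_cap vX vY.
Qed.

Lemma filter_span (X : seq V) (P : pred V) x : free X -> x \in X ->
  x \in <<filter P X>>%VS -> P x.
Proof.
move=> fX xX xP; apply/negPn/negP => nPx.
have f2 : free (filter P X ++ filter (predC P) X).
  by rewrite (perm_free (etrans (perm_filterC P X _) (perm_refl X))).
have xC : x \in filter (predC P) X by rewrite mem_filter /= nPx.
have x0 := cap0 f2 xP (memv_span xC).
by have := free_not0 fX xX; rewrite x0 eqxx.
Qed.

Lemma lcon_tens (c : 'cV[k]_N) (u v : V) : c^T *m tens u v = (u *m c) 0 0 *: v.
Proof.
by rewrite /tens mulmxA -trmx_mul {1}(mx11_scalar (u *m c)) tr_scalar_mx mul_scalar_mx.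
Qed.

Lemma rcon_tens (c : 'cV[k]_N) (u v : V) : (tens u v *m c)^T = (v *m c) 0 0 *: u.
Proof.
by rewrite /tens -mulmxA {1}(mx11_scalar (v *m c)) mul_mx_scalar linearZ /= trmxK.
Qed.

Lemma tens_suml I (r : seq I) (P : pred I) (F : I -> V) v :
  tens (\sum_(i <- r | P i) F i) v = \sum_(i <- r | P i) tens (F i) v.
Proof. by rewrite /tens linear_sum /= mulmx_suml. Qed.

Lemma tens_sumr I (r : seq I) (P : pred I) (F : I -> V) v :
  tens v (\sum_(i <- r | P i) F i) = \sum_(i <- r | P i) tens v (F i).
Proof. by rewrite /tens mulmx_sumr. Qed.

Lemma tensZl a (u v : V) : tens (a *: u) v = a *: tens u v.
Proof. by rewrite /tens linearZ /= scalemxAl. Qed.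

Lemma tensZr a (u v : V) : tens u (a *: v) = a *: tens u v.
Proof. by rewrite /tens scalemxAr. Qed.

Definition cf2 (c c' : 'cV[k]_N) (M : 'M[k]_N) := (c^T *m M *m c') 0 0.

Lemma cf2_tens c c' u v : cf2 c c' (tens u v) = (u *m c) 0 0 * (v *m c') 0 0.
Proof. by rewrite /cf2 lcon_tens -scalemxAl mxE. Qed.
Lemma cf2_sum c c' I (r : seq I) (P : pred I) (F : I -> 'M[k]_N) :
  cf2 c c' (\sum_(i <- r | P i) F i) = \sum_(i <- r | P i) cf2 c c' (F i).
Proof. by rewrite /cf2 mulmx_sumr mulmx_suml summxE. Qed.
Lemma cf2Z c c' a M : cf2 c c' (a *: M) = a * cf2 c c' M.
Proof. by rewrite /cf2 -scalemxAr -scalemxAl mxE. Qed.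

Variable H : hopf_data k N.

Lemma comulD u v : comul H (u + v) = comul H u + comul H v.
Proof. by rewrite /comul -big_split; apply: eq_bigr => i _; rewrite mxE scalerDl. Qed.
Lemma comulZ a u : comul H (a *: u) = a *: comul H u.
Proof. by rewrite /comul scaler_sumr; apply: eq_bigr => i _; rewrite mxE scalerA. Qed.
Lemma comul0 : comul H 0 = 0.
Proof. by rewrite -(scale0r 0) comulZ scale0r. Qed.
Lemma comul_sum I (r : seq I) (P : pred I) (F : I -> V) :
  comul H (\sum_(i <- r | P i) F i) = \sum_(i <- r | P i) comul H (F i).
Proof. exact: (big_morph _ comulD comul0). Qed.

Lemma counitD u v : counit H (u + v) = counit H u + counit H v.
Proof. by rewrite /counit -big_split; apply: eq_bigr => i _; rewrite mxE mulrDl. Qed.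
Lemma counitZ a u : counit H (a *: u) = a * counit H u.
Proof. by rewrite /counit mulr_sumr; apply: eq_bigr => i _; rewrite mxE mulrA. Qed.
Lemma counit0 : counit H 0 = 0.
Proof. by rewrite -(scale0r 0) counitZ mul0r. Qed.
Lemma counit_sum I (r : seq I) (P : pred I) (F : I -> V) :
  counit H (\sum_(i <- r | P i) F i) = \sum_(i <- r | P i) counit H (F i).
Proof. exact: (big_morph _ counitD counit0). Qed.

Lemma hmulDl u v w : hmul H (u + v) w = hmul H u w + hmul H v w.
Proof.
rewrite /hmul -big_split; apply: eq_bigr => i _; rewrite -big_split; apply: eq_bigr => j _.
by rewrite mxE mulrDl scalerDl.
Qed.
Lemma hmulZl a u w : hmul H (a *: u) w = a *: hmul H u w.
Proof.
rewrite /hmul scaler_sumr; apply: eq_bigr => i _; rewrite scaler_sumr; apply: eq_bigr => j _.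
by rewrite mxE scalerA mulrA.
Qed.
Lemma hmul0l w : hmul H 0 w = 0.
Proof. by have := hmulZl 0 0 w; rewrite !scale0r. Qed.
Lemma hmul_suml I (r : seq I) (P : pred I) (F : I -> V) w :
  hmul H (\sum_(i <- r | P i) F i) w = \sum_(i <- r | P i) hmul H (F i) w.
Proof. exact: (big_morph (hmul H ^~ w) (fun u v => hmulDl u v w) (hmul0l w)). Qed.
Lemma hmulDr u v w : hmul H w (u + v) = hmul H w u + hmul H w v.
Proof.
rewrite /hmul -big_split; apply: eq_bigr => i _; rewrite -big_split; apply: eq_bigr => j _.
by rewrite mxE mulrDr scalerDl.
Qed.
Lemma hmulZr a u w : hmul H w (a *: u) = a *: hmul H w u.
Proof.
rewrite /hmul scaler_sumr; apply: eq_bigr => i _; rewrite scaler_sumr; apply: eq_bigr => j _.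
by rewrite mxE scalerA mulrCA.
Qed.
Lemma hmul0r w : hmul H w 0 = 0.
Proof. by have := hmulZr 0 0 w; rewrite !scale0r. Qed.
Lemma hmul_sumr I (r : seq I) (P : pred I) (F : I -> V) w :
  hmul H w (\sum_(i <- r | P i) F i) = \sum_(i <- r | P i) hmul H w (F i).
Proof. exact: (big_morph (hmul H w) (fun u v => hmulDr u v w) (hmul0r w)). Qed.

End Gen.


Section Main.
Variables (k : closedFieldType) (N : nat) (H : hopf_data k N).
Hypothesis hunitl : forall u, hmul H (hunit H) u = u.
Variables (sT fT : finGroupType) (ract : sT -> fT -> sT)
  (sigma : sT -> fT -> fT -> k) (tau : fT -> sT -> sT -> k).
Hypothesis hsigma : forall s x y, sigma s x y != 0.
Hypothesis htau : forall x g h, tau x g h != 0.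
Variable b : sT -> fT -> 'rV[k]_N.
Hypothesis hbfree : free [seq b p.1 p.2 | p <- enum {: sT * fT}].
Hypothesis hbcard : (#|sT| * #|fT|)%N = N.
Hypothesis hbmul : forall s t x y, hmul H (b s x) (b t y)
             = if ract s x == t then sigma s x y *: b s (x * y)%g else 0.
Hypothesis hbunit : hunit H = \sum_(s : sT) b s 1%g.
Hypothesis hbcomul : forall s x, comul H (b s x)
             = \sum_(p : sT * sT | (p.1 * p.2)%g == s)
                  tau x p.1 p.2 *: tens (b p.1 x) (b p.2 x).
Hypothesis hbcounit : forall s x, counit H (b s x) = (s == 1%g)%:R.

Local Notation V := 'rV[k]_N.
Definition bb (p : sT * fT) := b p.1 p.2.

Lemma bb_inj : injective bb.
Proof. exact: (fam_inj (u:=bb) (free_uniq hbfree)). Qed.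

Lemma bb_mem p : bb p \in [seq b p.1 p.2 | p <- enum {: sT * fT}].
Proof. by apply: (map_f bb); rewrite mem_enum. Qed.

Definition bc p := sval (dual hbfree (bb_mem p)).
Lemma bcP q p : (bb q *m bc p) 0 0 = (q == p)%:R.
Proof. by rewrite /bc (svalP (dual hbfree (bb_mem p))) ?bb_mem // (inj_eq bb_inj). Qed.

Definition crd (v : V) p := (v *m bc p) 0 0.
Lemma crdD u v p : crd (u + v) p = crd u p + crd v p.
Proof. by rewrite /crd mulmxDl mxE. Qed.
Lemma crdZ a u p : crd (a *: u) p = a * crd u p.
Proof. by rewrite /crd -scalemxAl mxE. Qed.
Lemma crd0 p : crd 0 p = 0.
Proof. by rewrite /crd mul0mx mxE. Qed.
Lemma crd_sum I (r : seq I) (P : pred I) (F : I -> V) p :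
  crd (\sum_(i <- r | P i) F i) p = \sum_(i <- r | P i) crd (F i) p.
Proof. exact: (big_morph (crd ^~ p) (fun u v => crdD u v p) (crd0 p)). Qed.
Lemma crd_b s x p : crd (b s x) p = ((s, x) == p)%:R.
Proof. exact: (bcP (s, x) p). Qed.

Lemma expandB v : v = \sum_p crd v p *: bb p.
Proof.
have sz : size [seq b p.1 p.2 | p <- enum {: sT * fT}] = N.
  by rewrite size_map -cardE card_prod.
have [c ->] := fam_expand bb_inj (fullspan v hbfree sz).
by apply: eq_bigr => p _; rewrite /crd (sumdual _ (fun q => bcP q p)).
Qed.

Lemma expandB2 v : v = \sum_(s : sT) \sum_(x : fT) crd v (s, x) *: b s x.
Proof. by rewrite pair_bigA {1}(expandB v); apply: eq_bigr => -[s x]. Qed.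


Lemma bcP' s x p : (b s x *m bc p) 0 0 = ((s, x) == p)%:R.
Proof. exact: (bcP (s, x) p). Qed.

Lemma hmul_unit1 s t y : hmul H (b s 1%g) (b t y) = if s == t then b s y else 0.
Proof.
have key : forall s0, (if ract s0 1%g == t then sigma s0 1%g y else 0) = (t == s0)%:R.
  move=> s0; have := congr1 (crd ^~ (s0, y)) (hunitl (b t y)).
  rewrite hbunit hmul_suml crd_sum crd_b xpair_eqE eqxx andbT => <-.
  rewrite (bigD1 s0) //= big1 ?addr0 => [|s' ns']; rewrite hbmul mul1g;
    case: ifP => _; rewrite ?crd0 // crdZ crd_b xpair_eqE ?eqxx ?(negbTE ns') ?mulr1 ?mulr0 //.
rewrite hbmul mul1g; have := key s; case: ifP => hr.
  case: (t =P s) => [ts|nts] sig.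
    by rewrite sig scale1r ts eqxx.
  by move: (hsigma s 1%g y); rewrite sig eqxx.
case: (t =P s) => [_|nts] h; first by move/eqP: h; rewrite eq_sym oner_eq0.
by case: eqP => // st; case: nts.
Qed.

Lemma cf2_comul_b s x p1 p2 q1 q2 :
  cf2 (bc (p1, p2)) (bc (q1, q2)) (comul H (b s x))
  = if (p2 == x) && (q2 == x) && ((p1 * q1)%g == s) then tau x p1 q1 else 0.
Proof.
rewrite hbcomul cf2_sum.
rewrite (eq_bigr (fun w => if w == (p1, q1) then
           (if (p2 == x) && (q2 == x) then tau x w.1 w.2 else 0) else 0)); last first.
  move=> [w1 w2] _ /=; rewrite cf2Z cf2_tens !bcP' !xpair_eqE (eq_sym x p2) (eq_sym x q2).
  by case: (w1 == p1); case: (w2 == q1); case: (p2 == x); case: (q2 == x);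
    rewrite /= ?mulr1 ?mulr0.
rewrite sum_if1 /=.
by case: ((p1 * q1)%g == s); rewrite ?andbT ?andbF.
Qed.

Definition fB v := if [pick x | crd v (1%g, x) != 0] is Some x then x else 1%g.

Lemma GL g : grouplike H g ->
  [/\ forall s y, y != fB g -> crd g (s, y) = 0, crd g (1%g, fB g) = 1,
      forall s t, crd g ((s * t)%g, fB g) * tau (fB g) s t = crd g (s, fB g) * crd g (t, fB g),
      forall s, crd g (s, fB g) != 0
    & g = \sum_s crd g (s, fB g) *: b s (fB g)].
Proof.
move=> [hc he].
have coef : forall p1 p2 q1 q2, crd g (p1, p2) * crd g (q1, q2)
    = if p2 == q2 then crd g ((p1 * q1)%g, p2) * tau p2 p1 q1 else 0.
  move=> p1 p2 q1 q2.
  have := congr1 (cf2 (bc (p1, p2)) (bc (q1, q2))) hc.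
  rewrite cf2_tens => <-.
  rewrite {1}(expandB2 g) comul_sum cf2_sum.
  rewrite (eq_bigr (fun s => if s == (p1 * q1)%g then
      (if p2 == q2 then crd g (s, p2) * tau p2 p1 q1 else 0) else 0)); last first.
    move=> s _; rewrite comul_sum cf2_sum.
    rewrite (eq_bigr (fun x => if x == p2 then (if (q2 == p2) && ((p1 * q1)%g == s)
        then crd g (s, x) * tau x p1 q1 else 0) else 0)); last first.
      move=> x _; rewrite comulZ cf2Z cf2_comul_b.
      case: (p2 =P x) => [<-|nx] /=; first by rewrite eqxx; case: ifP; rewrite ?mulr0.
      by rewrite mulr0; case: (x =P p2) => // e; case: nx.
    rewrite sum_if1T (eq_sym q2) (eq_sym s).
    by case: ((p1 * q1)%g =P s) => [<-|]; case: (p2 == q2); rewrite /= ?eqxx //; case: ifP.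
  by rewrite sum_if1T.
have hsum : \sum_x crd g (1%g, x) = 1.
  rewrite -he; symmetry; rewrite {1}(expandB2 g) counit_sum (bigD1 1%g) //=.
  rewrite [X in _ + X]big1 ?addr0.
    rewrite counit_sum; apply: eq_bigr => x _.
    by rewrite counitZ hbcounit eqxx mulr1.
  move=> s ns; rewrite counit_sum big1 // => x _.
  by rewrite counitZ hbcounit (negbTE ns) mulr0.
have fBP : crd g (1%g, fB g) != 0.
  rewrite /fB; case: pickP => [x //|none].
  move: hsum; rewrite big1 => [|x _]; last by have := none x; move/negbFE/eqP.
  by move/eqP; rewrite eq_sym oner_eq0.
have h1 : forall s y, y != fB g -> crd g (s, y) = 0.
  move=> s y ny; have := coef s y 1%g (fB g); rewrite (negbTE ny).
  by move/eqP; rewrite mulf_eq0 (negbTE fBP) orbF => /eqP.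
have h2 : crd g (1%g, fB g) = 1.
  by rewrite -hsum (bigD1 (fB g)) //= big1 ?addr0 // => y; apply: h1.
have h3 : forall s t, crd g ((s * t)%g, fB g) * tau (fB g) s t
    = crd g (s, fB g) * crd g (t, fB g).
  by move=> s t; rewrite coef eqxx.
split => //.
  move=> s; have := h3 s s^-1%g; rewrite mulgV h2 mul1r => e.
  apply/negP => /eqP c0; move: (htau (fB g) s s^-1%g); by rewrite e c0 mul0r eqxx.
rewrite {1}(expandB2 g); apply: eq_bigr => s _.
by rewrite (bigD1 (fB g)) //= big1 ?addr0 // => y ny; rewrite h1 // scale0r.
Qed.


Lemma GL_triv g : grouplike H g -> trivial_class (tau (fB g)).
Proof.
move=> gg; have [_ _ h3 h4 _] := GL gg.
exists (fun s => crd g (s, fB g)); split => // s t.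
by rewrite -h3 mulrAC divff ?mul1r.
Qed.

Lemma fB_mul g h : grouplike H g -> grouplike H h -> grouplike H (hmul H g h) ->
  fB (hmul H g h) = (fB g * fB h)%g.
Proof.
move=> gg gh ggh.
have key : forall z, z != (fB g * fB h)%g -> crd (hmul H g h) (1%g, z) = 0.
  move=> z nz.
  have [_ _ _ _ eg] := GL gg; have [_ _ _ _ eh] := GL gh.
  rewrite {1}eg {1}eh hmul_suml crd_sum big1 // => s _.
  rewrite hmulZl hmul_sumr crdZ crd_sum big1 ?mulr0 // => t _.
  rewrite hmulZr crdZ hbmul; case: ifP => _; rewrite ?crd0 ?mulr0 // crdZ crd_b xpair_eqE.
  by rewrite (eq_sym _ z) (negbTE nz) andbF !mulr0.
have [_ h2 _ _ _] := GL ggh.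
apply/eqP; apply: contraT => ne.
by move: h2; rewrite key // => /eqP; rewrite eq_sym oner_eq0.
Qed.


Variables (G : seq 'rV[k]_N) (d n : nat).
Hypothesis hGu : uniq G.
Hypothesis hGg : forall g, g \in G -> grouplike H g.
Hypothesis hGamma : <<[seq b s 1%g | s <- enum sT]>>%VS
            = <<[seq g <- G | `[< forall chi, irr_char H d chi -> hmul H g chi = chi >]]>>%VS.
Variable E : 'I_n -> 'I_d -> 'I_d -> 'rV[k]_N.
Hypothesis hE : forall l, matcoalg H (E l).
Hypothesis hEf : free (G ++ [seq E p.1 p.2.1 p.2.2 | p <- enum {: 'I_n * ('I_d * 'I_d)}]).

Definition Gam := [seq g <- G | `[< forall chi, irr_char H d chi -> hmul H g chi = chi >]].

Lemma inj1 : injective (fun s => b s 1%g).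
Proof. by move=> s t e; case: (bb_inj (e : bb (s, 1%g) = bb (t, 1%g))). Qed.

Lemma kerB g : g \in G -> (fB g = 1%g <-> g \in Gam).
Proof.
move=> gG; have gg := hGg gG; have [h1 h2 _ _ eg] := GL gg.
have fG : free G := catl_free hEf.
split => [f1|gGam].
  have : g \in <<Gam>>%VS.
    rewrite -hGamma eg f1; apply: rpred_sum => s _; apply: rpredZ; apply: memv_span.
    by apply: (map_f (fun s => b s 1%g)); rewrite mem_enum.
  by move/(filter_span fG gG) => P; rewrite mem_filter P gG.
have : g \in <<[seq b s 1%g | s <- enum sT]>>%VS by rewrite hGamma memv_span.
case/span_expand => [|c e]; first by rewrite map_inj_uniq ?enum_uniq //; exact: inj1.
apply/eqP; apply: contraT => ne.
have : crd g (1%g, fB g) = 0.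
  rewrite {1}e big_map crd_sum big1 // => s _.
  by rewrite crdZ crd_b xpair_eqE (eq_sym 1%g (fB g)) (negbTE ne) andbF mulr0.
by rewrite h2 => /eqP; rewrite oner_eq0.
Qed.

Definition chi l := \sum_(i < d) E l i i.

Lemma chi_irr l : irr_char H d (chi l).
Proof. by exists (E l); split; [exact: hE|]. Qed.

Lemma gam_inv x l : x \in Gam -> hmul H x (chi l) = chi l.
Proof. by rewrite mem_filter => /andP[/asboolP P _]; exact: P _ (chi_irr l). Qed.

Lemma b1_chi s l : hmul H (b s 1%g) (chi l) = (s == 1%g)%:R *: chi l.
Proof.
have : b s 1%g \in <<Gam>>%VS.
  by rewrite -hGamma memv_span //; apply: (map_f (fun s => b s 1%g)); rewrite mem_enum.
case/span_expand => [|a e]; first exact: filter_uniq.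
have hc : \sum_(x <- Gam) a x = (s == 1%g)%:R.
  rewrite -(hbcounit s 1%g) e counit_sum; apply: eq_big_seq => x xG; rewrite counitZ.
  have xG' : x \in G by move: xG; rewrite mem_filter => /andP[].
  by have [_ ->] := hGg xG'; rewrite mulr1.
rewrite e hmul_suml -hc scaler_suml; apply: eq_big_seq => x xG.
by rewrite hmulZl gam_inv.
Qed.

Lemma chi_crd l s y : s != 1%g -> crd (chi l) (s, y) = 0.
Proof.
move=> ns.
have := congr1 (crd ^~ (s, y)) (b1_chi s l).
rewrite crdZ (negbTE ns) mul0r => <-; symmetry.
rewrite [in LHS](expandB (chi l)) hmul_sumr crd_sum.
rewrite (eq_bigr (fun p => if p == (s, y) then crd (chi l) p else 0)) ?sum_if1T // => -[t x] _.
rewrite hmulZr crdZ /bb /= hmul_unit1; case: (s =P t) => [<-|nst].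
  by rewrite crd_b; case: eqP => _; rewrite ?mulr1 ?mulr0.
by rewrite crd0 mulr0; case: eqP => // -[e _]; case: nst.
Qed.

Lemma chi_exp l : chi l = \sum_y crd (chi l) (1%g, y) *: b 1%g y.
Proof.
rewrite {1}(expandB2 (chi l)) (bigD1 1%g) //= [X in _ + X]big1 ?addr0 // => s ns.
by apply: big1 => y _; rewrite chi_crd // scale0r.
Qed.

Lemma lcon_comul_b1 p y y0 :
  (bc (p, y0))^T *m comul H (b 1%g y) = if y == y0 then tau y p p^-1%g *: b p^-1%g y else 0.
Proof.
rewrite hbcomul mulmx_sumr.
rewrite (eq_bigr (fun w => if w == (p, p^-1)%g then
     (if y == y0 then tau y w.1 w.2 *: b w.2 y else 0) else 0)).
  by rewrite sumv_if1 /= mulgV eqxx.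
move=> [w1 w2] /= hw; rewrite -scalemxAr lcon_tens bcP' xpair_eqE.
case: (w1 =P p) => [e|ne] /=.
  subst w1; have e2 : w2 = p^-1%g by apply/eqP; rewrite eq_sym eq_invg_mul.
  subst w2; rewrite eqxx; case: (y == y0); by rewrite ?scale1r ?scale0r ?scaler0.
rewrite scale0r scaler0 xpair_eqE; case: eqP => // e; by case: ne.
Qed.

Definition El l := fam (fun p : 'I_d * 'I_d => E l p.1 p.2).

Lemma W l y0 s : crd (chi l) (1%g, y0) != 0 -> b s y0 \in <<El l>>%VS.
Proof.
move=> cy.
have hin : (bc (s^-1, y0)%g)^T *m comul H (chi l) \in <<El l>>%VS.
  rewrite /chi comul_sum mulmx_sumr; apply: rpred_sum => i _.
  have [_ hc _] := hE l; rewrite hc mulmx_sumr; apply: rpred_sum => m _.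
  rewrite lcon_tens; apply: rpredZ; apply: memv_span.
  exact: (map_f (fun p : 'I_d * 'I_d => E l p.1 p.2) (mem_enum _ (m, i))).
move: hin; rewrite {1}(chi_exp l) comul_sum mulmx_sumr.
rewrite (eq_bigr (fun y => if y == y0 then (crd (chi l) (1%g, y0) * tau y0 s^-1%g s^-1^-1%g)
     *: b s^-1^-1%g y0 else 0)) ?sumv_if1T; last first.
  move=> y _; rewrite comulZ -scalemxAr lcon_comul_b1.
  by case: (y =P y0) => [->|_]; rewrite ?scalerA ?scaler0.
rewrite invgK => h.
have nz : crd (chi l) (1%g, y0) * tau y0 s^-1%g s != 0 by rewrite mulf_neq0.
by have := rpredZ (crd (chi l) (1%g, y0) * tau y0 s^-1%g s)^-1 h; rewrite scalerA mulVf ?scale1r.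
Qed.


Definition Hy y := fam (fun s => b s y).

Lemma Hy_inj y : injective (fun s => b s y).
Proof. by move=> s t e; case: (bb_inj (e : bb (s, y) = bb (t, y))). Qed.

Lemma Hy_free y : free (Hy y).
Proof.
apply: (subfree hbfree); first by rewrite /Hy /fam map_inj_uniq ?enum_uniq //; exact: Hy_inj.
by move=> x /mapP[s _ ->]; exact: (bb_mem (s, y)).
Qed.

Lemma size_Hy y : size (Hy y) = #|sT|.
Proof. by rewrite /Hy /fam size_map -cardE. Qed.

Lemma size_El l : size (El l) = (d * d)%N.
Proof. by rewrite /El /fam size_map -cardE card_prod card_ord. Qed.

Lemma card_le l y0 : crd (chi l) (1%g, y0) != 0 -> (#|sT| <= d * d)%N.
Proof.
move=> cy; rewrite -(size_Hy y0) -(size_El l); apply: (dimle (Hy_free y0)).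
by move=> x /mapP[s _ ->]; exact: W.
Qed.

Definition EE (j : 'I_n * ('I_d * 'I_d)) := E j.1 j.2.1 j.2.2.

Lemma EE_inj : injective EE.
Proof. exact: (fam_inj (u:=EE) (free_uniq (catr_free hEf))). Qed.

Lemma EE_mem j : EE j \in G ++ [seq E p.1 p.2.1 p.2.2 | p <- enum {: 'I_n * ('I_d * 'I_d)}].
Proof. by rewrite mem_cat; apply/orP; right; apply: (map_f EE); rewrite mem_enum. Qed.

Definition ec j := sval (dual hEf (EE_mem j)).

Lemma ecP l i j l' i' j' : (E l' i' j' *m ec (l, (i, j))) 0 0 = ((l', (i', j')) == (l, (i, j)))%:R.
Proof.
rewrite /ec (svalP (dual hEf (EE_mem (l, (i, j)))) (EE (l', (i', j')))) ?EE_mem //.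
by rewrite (inj_eq EE_inj).
Qed.

Lemma ecP2 l p q : (E l p.1 p.2 *m ec (l, q)) 0 0 = (p == q)%:R.
Proof. by case: p q => [i j] [i' j']; rewrite ecP !xpair_eqE eqxx. Qed.

Lemma El_inj l : injective (fun p : 'I_d * 'I_d => E l p.1 p.2).
Proof. by move=> p q e; case: (EE_inj (e : EE (l, p) = EE (l, q))). Qed.

Lemma El_free l : free (El l).
Proof.
apply: (subfree (catr_free hEf)); first by rewrite /El /fam map_inj_uniq ?enum_uniq //; exact: El_inj.
by move=> x /mapP[p _ ->]; apply: (map_f EE (mem_enum _ (l, p))).
Qed.

Lemma CL y c v : v \in <<Hy y>>%VS ->
  c^T *m comul H v \in <<Hy y>>%VS /\ (comul H v *m c)^T \in <<Hy y>>%VS.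
Proof.
case/(fam_expand (Hy_inj (y:=y))) => a ->; rewrite comul_sum mulmx_sumr mulmx_suml trS.
split; apply: rpred_sum => s _; rewrite comulZ hbcomul.
  rewrite -scalemxAr mulmx_sumr; apply: rpredZ; apply: rpred_sum => w _.
  rewrite -scalemxAr lcon_tens; apply: rpredZ; apply: rpredZ; apply: memv_span.
  exact: (map_f (fun s => b s y) (mem_enum _ w.2)).
rewrite -scalemxAl mulmx_suml trZ trS; apply: rpredZ; apply: rpred_sum => w _.
rewrite -scalemxAl trZ rcon_tens; apply: rpredZ; apply: rpredZ; apply: memv_span.
exact: (map_f (fun s => b s y) (mem_enum _ w.1)).
Qed.


Lemma bnz s y : b s y != 0.
Proof. exact: (free_not0 hbfree (bb_mem (s, y))). Qed.

Lemma El_in_Hy l y0 : crd (chi l) (1%g, y0) != 0 -> forall q r, E l q r \in <<Hy y0>>%VS.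
Proof.
move=> cy q r.
have v1 : b 1%g y0 \in <<El l>>%VS by exact: W.
have v2 : b 1%g y0 \in <<Hy y0>>%VS.
  by apply: memv_span; exact: (map_f (fun s => b s y0) (mem_enum _ 1%g)).
have [a ea] := fam_expand (El_inj (l:=l)) v1.
have [[i j] aij] : exists p, a p != 0.
  case: (pickP (fun p => a p != 0)) => [p ap|none]; first by exists p.
  move: (bnz 1%g y0); rewrite ea big1 ?eqxx // => p _.
  by move/negbFE/eqP: (none p) => ->; rewrite scale0r.
set w := (ec (l, (i, q)))^T *m comul H (b 1%g y0).
have ew : w = \sum_(p : 'I_d * 'I_d) (if p.1 == i then a p else 0) *: E l q p.2.
  rewrite /w ea comul_sum mulmx_sumr; apply: eq_bigr => -[p1 p2] _ /=.
  have [_ hc _] := hE l; rewrite comulZ -scalemxAr hc mulmx_sumr.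
  rewrite (eq_bigr (fun m => if m == q then (if p1 == i then E l q p2 else 0) else 0)).
    by rewrite sumv_if1T; case: (p1 == i); rewrite ?scaler0 ?scale0r.
  move=> m _; rewrite lcon_tens ecP !xpair_eqE eqxx /=.
  by case: (m =P q) => [->|_]; case: (p1 == i); rewrite /= ?scale1r ?scale0r.
have hw : w \in <<Hy y0>>%VS by case: (CL (ec (l, (i, q))) v2).
have := (CL (ec (l, (r, j))) hw).2.
rewrite ew comul_sum mulmx_suml trS.
rewrite (eq_bigr (fun p => (if p == (i, j) then a p else 0) *: E l q r)); last first.
  move=> [p1 p2] _; have [_ hc _] := hE l.
  rewrite comulZ hc -scalemxAl mulmx_suml trZ trS.
  rewrite (eq_bigr (fun m => if m == r then (if p2 == j then E l q r else 0) else 0)).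
    rewrite sumv_if1T xpair_eqE /=.
    by case: (p1 == i); case: (p2 == j); rewrite /= ?scaler0 ?scale0r ?scale1r.
  move=> m _; rewrite rcon_tens ecP !xpair_eqE eqxx /=.
  by case: (m =P r) => [->|_]; case: (p2 == j); rewrite /= ?scale1r ?scale0r.
rewrite -scaler_suml sum_if1T => h.
by have := rpredZ (a (i, j))^-1 h; rewrite scalerA mulVf ?scale1r.
Qed.

Lemma card_ge l y0 : crd (chi l) (1%g, y0) != 0 -> (d * d <= #|sT|)%N.
Proof.
move=> cy; rewrite -(size_Hy y0) -(size_El l); apply: (dimle (El_free l)).
by move=> x /mapP[[q r] _ ->]; exact: El_in_Hy.
Qed.


Hypothesis hd : (1 < d)%N.

Lemma chi_nz l : exists y, crd (chi l) (1%g, y) != 0.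
Proof.
case: (pickP (fun y => crd (chi l) (1%g, y) != 0)) => [y hy|none]; first by exists y.
pose i0 : 'I_d := Ordinal (ltnW hd).
have h1 : (chi l *m ec (l, (i0, i0))) 0 0 = 1.
  rewrite /chi mulmx_suml summxE (eq_bigr (fun i => if i == i0 then 1 else 0)) ?sum_if1T //.
  by move=> i _; rewrite ecP !xpair_eqE eqxx /= andbb; case: eqP.
move: h1; rewrite {1}(chi_exp l) big1 => [|y _]; last first.
  by move/negbFE/eqP: (none y) => ->; rewrite scale0r.
by rewrite mul0mx mxE => /eqP; rewrite eq_sym oner_eq0.
Qed.

Definition ycl l := if [pick y | crd (chi l) (1%g, y) != 0] is Some y then y else 1%g.

Lemma ycl_P l : crd (chi l) (1%g, ycl l) != 0.
Proof.
rewrite /ycl; case: pickP => [y //|none].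
by have [y hy] := chi_nz l; move: (none y); rewrite hy.
Qed.

Lemma card_sT (l0 : 'I_n) : #|sT| = (d * d)%N.
Proof. by apply/eqP; rewrite eqn_leq (card_le (ycl_P l0)) (card_ge (ycl_P l0)). Qed.


Lemma ycl_nontriv l : ~ trivial_class (tau (ycl l)).
Proof.
move=> [mu [mu0 hmu]].
set y := ycl l.
set g := \sum_s mu s *: b s y.
have cg : comul H g = tens g g.
  transitivity (\sum_(w : sT * sT) (mu w.1 * mu w.2) *: tens (b w.1 y) (b w.2 y)).
    rewrite /g comul_sum.
    rewrite (eq_bigr (fun s => \sum_(w : sT * sT) (if (w.1 * w.2)%g == s then
        (mu w.1 * mu w.2) *: tens (b w.1 y) (b w.2 y) else 0))); last first.
      move=> s _; rewrite comulZ hbcomul scaler_sumr big_mkcond /=; apply: eq_bigr => w _.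
      case: eqP => [e|_] //; by rewrite -e scalerA hmu mulrC divfK.
    by rewrite exchange_big /=; apply: eq_bigr => w _; rewrite sumZ_if1Ts.
  symmetry; rewrite /g tens_suml (eq_bigr (fun s => \sum_t (mu s * mu t) *: tens (b s y) (b t y))).
    by rewrite pair_bigA.
  move=> s _; rewrite tens_sumr; apply: eq_bigr => t _; by rewrite tensZl tensZr scalerA.
have g0 : crd g (1%g, y) = mu 1%g.
  rewrite /g crd_sum (eq_bigr (fun s => if s == 1%g then mu s else 0)) ?sum_if1T // => s _.
  by rewrite crdZ crd_b xpair_eqE eqxx andbT; case: eqP => _; rewrite ?mulr1 ?mulr0.
have gE : g \in <<El l>>%VS.
  by rewrite /g; apply: rpred_sum => s _; apply: rpredZ; apply: W; exact: ycl_P.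
have [a ea] := fam_expand (El_inj (l:=l)) gE.
have [_ hc _] := hE l.
have rel : forall i j k' m, a (i, j) * a (k', m) = (j == k')%:R * a (i, m).
  move=> i j k' m; have := congr1 (cf2 (ec (l, (i, j))) (ec (l, (k', m)))) cg.
  rewrite ea cf2_tens (sumdual (u:=fun p : 'I_d * 'I_d => E l p.1 p.2) a (fun p => ecP2 l p (i, j))).
  rewrite (sumdual (u:=fun p : 'I_d * 'I_d => E l p.1 p.2) a (fun p => ecP2 l p (k', m))) => <-.
  rewrite comul_sum cf2_sum (eq_bigr (fun p => if p == (i, m) then (j == k')%:R * a p else 0)).
    by rewrite sum_if1T.
  move=> -[p1 p2] _; rewrite comulZ cf2Z hc cf2_sum.
  rewrite (eq_bigr (fun x => if x == j then ((p1 == i) && (j == k') && (p2 == m))%:R else 0)).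
    rewrite sum_if1T xpair_eqE /=.
    case: (p1 =P i) => [->|_]; case: (p2 =P m) => [->|_]; rewrite /= ?andbF ?mulr0 //.
    by case: (j == k'); rewrite ?mulr1 ?mul1r ?mulr0 ?mul0r.
  move=> x _; rewrite cf2_tens !ecP !xpair_eqE !eqxx /=.
  case: (x =P j) => [->|_]; rewrite ?andbF ?mul0r //= ?eqxx.
  by case: (p1 == i); case: (j == k'); case: (p2 == m); rewrite /= ?mulr1 ?mulr0 ?mul1r ?mul0r.
have a0 : forall p, a p = 0.
  move=> [i m]; pose o0 : 'I_d := Ordinal (ltnW hd); pose o1 : 'I_d := Ordinal hd.
  have r1 := rel i o0 o0 m; have r2 := rel i o1 o1 m; have r3 := rel i o0 o1 m.
  rewrite eqxx mul1r in r1; rewrite eqxx mul1r in r2.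
  have e01 : (o0 == o1) = false by [].
  rewrite e01 mul0r in r3.
  have e : a (i, m) * a (i, m) = (a (i, o0) * a (o1, m)) * (a (o0, m) * a (i, o1)).
    by rewrite -{1}r1 -r2; ring.
  by apply/eqP; move: e; rewrite r3 mul0r => /eqP; rewrite mulf_eq0 orbb.
move: g0; rewrite ea big1 => [|p _]; last by rewrite a0 scale0r.
by rewrite crd0 => /eqP; rewrite eq_sym (negbTE (mu0 1%g)).
Qed.

Lemma ycl_inj : injective ycl.
Proof.
move=> l l' e; apply/eqP; apply: contraT => nl.
have v : b 1%g (ycl l) \in <<El l>>%VS := W _ (ycl_P l).
have v' : b 1%g (ycl l) \in <<El l'>>%VS by rewrite e; exact: W _ (ycl_P l').
have f2 : free (El l ++ El l').
  apply: (subfree (catr_free hEf)).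
    rewrite cat_uniq (free_uniq (El_free l)) (free_uniq (El_free l')) /= andbT.
    apply/hasPn => x /mapP [p _ ->]; apply/negP => /mapP [p' _ e'].
    by case: (EE_inj (e' : EE (l', p) = EE (l, p'))) => el _; rewrite el eqxx in nl.
  move=> x; rewrite mem_cat => /orP [] /mapP [p _ ->].
    exact: (map_f EE (mem_enum _ (l, p))).
  exact: (map_f EE (mem_enum _ (l', p))).
by move: (bnz 1%g (ycl l)); rewrite (cap0 f2 v v') eqxx.
Qed.


Hypothesis hG1 : hunit H \in G.
Hypothesis hGm : forall g h, g \in G -> h \in G -> hmul H g h \in G.
Hypothesis hidx : N = (2 * size G)%N.
Hypothesis hGsize : size G = (d ^ 2 * n)%N.

Lemma main_sec :
  let inGamma := fun g => g \in G /\ forall chi, irr_char H d chi -> hmul H g chi = chi in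
  let F0 := [set x : fT | `[< trivial_class (tau x) >]] in
  (exists f : 'rV[k]_N -> fT,
      [/\ forall g h, g \in G -> h \in G -> f (hmul H g h) = (f g * f h)%g,
          forall g, g \in G -> f g \in F0,
          forall x, x \in F0 -> exists2 g, g \in G & f g = x &
          forall g, g \in G -> (f g = 1%g <-> inGamma g)])
  /\ #|F0| = n.
Proof.
move=> inGamma F0.
have F0P x : (x \in F0) <-> trivial_class (tau x).
  by rewrite inE; split => /asboolP.
have fG g : g \in G -> fB g \in F0 by move=> gG; apply/F0P; exact: GL_triv (hGg gG).
have n0 : (0 < n)%N.
  have : (0 < size G)%N by move: hG1; case: (G) => // ; rewrite in_nil.
  by rewrite hGsize muln_gt0 => /andP[].
pose l0 : 'I_n := Ordinal n0.
have cs := card_sT l0.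
have dd0 : (0 < d * d)%N by rewrite muln_gt0 (ltnW hd).
have cf : #|fT| = (2 * n)%N.
  have : (#|sT| * #|fT| = #|sT| * (2 * n))%N.
    by rewrite hbcard hidx hGsize cs mulnn mulnCA.
  by move/eqP; rewrite eqn_pmul2l ?cs // => /eqP.
have hY : (n <= #|~: F0|)%N.
  have <- : #|ycl @: [set: 'I_n]| = n by rewrite (card_imset _ ycl_inj) cardsT card_ord.
  apply: subset_leq_card; apply/subsetP => x /imsetP [l _ ->].
  by rewrite in_setC; apply/negP => /F0P; exact: ycl_nontriv.
have hF0 : (#|F0| <= n)%N.
  have := cardsC F0; rewrite cf => e.
  by rewrite -(leq_add2r #|~: F0|) e mul2n -addnn leq_add2l.
pose FG := [set x : fT | has (fun g => fB g == x) G].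
have sFG : FG \subset F0.
  by apply/subsetP => x; rewrite inE => /hasP [g gG /eqP <-]; exact: fG.
have hFG : (n <= #|FG|)%N.
  have : (size G <= #|sT| * #|FG|)%N.
    have -> : (#|sT| * #|FG|)%N = size [seq bb p | p <- enum (setX [set: sT] FG)].
      by rewrite size_map -cardE cardsX cardsT.
    apply: dimle (catl_free hEf) _ => g gG.
    have [_ _ _ _ eg] := GL (hGg gG).
    rewrite eg; apply: rpred_sum => s _; apply: rpredZ; apply: memv_span.
    rewrite (_ : b s (fB g) = bb (s, fB g)) //; apply: map_f; rewrite mem_enum in_setX inE /= inE.
    by apply/hasP; exists g.
  by rewrite hGsize cs mulnn leq_pmul2l // expn_gt0 (ltnW (ltnW hd)).
have eF : FG = F0.
  by apply/eqP; rewrite eqEcard sFG (leq_trans hF0 hFG).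
split; last by apply/eqP; rewrite eqn_leq hF0 -eF hFG.
exists fB; split.
- by move=> g h gG hG; apply: fB_mul; [exact: hGg | exact: hGg | exact: hGg (hGm gG hG)].
- exact: fG.
- by move=> x; rewrite -eF inE => /hasP [g gG /eqP <-]; exists g.
- move=> g gG; rewrite (kerB gG) /inGamma mem_filter gG andbT; split.
    by move/asboolP => P; split.
  by case=> _ P; apply/asboolP.
Qed.

End Main.

End Aux.

Theorem proposition5p4
  (* the base field: algebraically closed of characteristic 0 *)
  (k : closedFieldType) (hchar : [pchar k] =i pred0)
  (* H : a Hopf algebra of dimension N *)
  (N : nat) (H : hopf_data k N) (hH : is_hopf H)
  (hss : semisimple H) (hnc : ~ cocommutative H)
  (* G : a subgroup of G(H) of index [H : kG] = 2 *)
  (G : seq 'rV[k]_N) (hGu : uniq G)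
  (hGg : forall g, g \in G -> grouplike H g)
  (hG1 : hunit H \in G)
  (hGm : forall g h, g \in G -> h \in G -> hmul H g h \in G)
  (hGi : forall g, g \in G -> anti H g \in G)
  (hidx : N = (2 * size G)%N)
  (* the coalgebra decomposition H = kG (+) M_d(k)^n, d > 1, |G| = d^2 n *)
  (d n : nat) (hd : (1 < d)%N) (hGsize : size G = (d ^ 2 * n)%N)
  (hdec : exists E : 'I_n -> 'I_d -> 'I_d -> 'rV[k]_N,
      (forall l, matcoalg H (E l)) /\
      free (G ++ [seq E p.1 p.2.1 p.2.2 | p <- enum {: 'I_n * ('I_d * 'I_d)}]))
  (* bicrossed product presentation H = k^{Gammahat} tau#sigma kF, given by
     the images b s x in H of the basis elements e_s # x *)
  (sT fT : finGroupType) (habel : abelian [set: sT])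
  (ract : sT -> fT -> sT)
  (sigma : sT -> fT -> fT -> k) (tau : fT -> sT -> sT -> k)
  (hsigma : forall s x y, sigma s x y != 0)
  (htau : forall x g h, tau x g h != 0)
  (b : sT -> fT -> 'rV[k]_N)
  (hbasis : free [seq b p.1 p.2 | p <- enum {: sT * fT}]
            /\ (#|sT| * #|fT|)%N = N)
  (hbmul : forall s t x y, hmul H (b s x) (b t y)
             = if ract s x == t then sigma s x y *: b s (x * y)%g else 0)
  (hbunit : hunit H = \sum_(s : sT) b s 1%g)
  (hbcomul : forall s x, comul H (b s x)
             = \sum_(p : sT * sT | (p.1 * p.2)%g == s)
                  tau x p.1 p.2 *: tens (b p.1 x) (b p.2 x))
  (hbcounit : forall s x, counit H (b s x) = (s == 1%g)%:R)
  (* k^{Gammahat} # 1 corresponds to kGamma, Gamma = common stabilizer in G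
     (under left multiplication) of the irreducible characters of degree d *)
  (hGamma : <<[seq b s 1%g | s <- enum sT]>>%VS
            = <<[seq g <- G | `[< forall chi, irr_char H d chi -> hmul H g chi = chi >]]>>%VS) :
  let inGamma := fun g => g \in G /\ forall chi, irr_char H d chi -> hmul H g chi = chi in
  let F0 := [set x : fT | `[< trivial_class (tau x) >]] in
  (exists f : 'rV[k]_N -> fT,
      [/\ forall g h, g \in G -> h \in G -> f (hmul H g h) = (f g * f h)%g,
          forall g, g \in G -> f g \in F0,
          forall x, x \in F0 -> exists2 g, g \in G & f g = x &
          forall g, g \in G -> (f g = 1%g <-> inGamma g)])
  /\ #|F0| = n.
Proof.
have hunitl : forall u, hmul H (hunit H) u = u.
  by move=> u; case: hH => _ [h _]; exact: (h u).1.
case: hdec => E [hE hEf].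
case: hbasis => hbf hbc.
exact: (Aux.main_sec hunitl hsigma htau hbf hbc hbmul hbunit hbcomul hbcounit hGu hGg hGamma hE hEf hd hG1 hGm hidx hGsize).
Qed.
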